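(* Define numbers $m_{n,k}$ ($n,k\ge0$) by $m_{0,k}=\delta_{0k}$ and $m_{n,k}=(m_{n-1,0}+m_{n-1,1}+\cdots+m_{n-1,k})^{-1}$ for $n\ge1$. Then for each fixed $k\ge0$, $$m_{0,k}\le m_{2,k}\le m_{4,k}\le\cdots,\qquad m_{1,k}\ge m_{3,k}\ge m_{5,k}\ge\cdots,$$ and $\lim_{n\to\infty}m_{2n,k}=\lim_{n\to\infty}m_{2n+1,k}=m_k$. Furthermore $\lim_{k\to\infty}m_{n,k}=0$ for every $n\ge2$; consequently the probability measure $\mu_n=\widehat T^{\circ n}(\delta_0)$, whose moment sequence is $(m_{n,k})_k$, has no mass at $t=1$ for $n\ge2$.
   Context: Let $(m_n)_{n\ge0}$ be the unique sequence of positive reals with $m_0=1$ and $(1+m_1+\cdots+m_n)\,m_n=1$ for $n\ge1$. For a normalized Hausdorff moment sequence $\mathbf a=(a_n)_n$ (i.e. $a_n=\int_0^1 t^n\,d\nu(t)$ for a probability measure $\nu$ on $[0,1]$), $T(\mathbf a)_n=1/(a_0+\cdots+a_n)$ defines again a normalized Hausdorff moment sequence; $\widehat T$ denotes the corresponding map on probability measures on $[0,1]$ (so $\widehat T(\nu)$ has moments $T(\mathbf a)$). $\delta_q$ denotes the unit point mass at $q$. *)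

(* Defs.v *)
From HB Require Import structures.
From mathcomp Require Import all_boot all_order all_algebra.
From mathcomp Require Import all_classical all_reals all_analysis.
Set Implicit Arguments. Unset Strict Implicit. Unset Printing Implicit Defensive.
Import Order.TTheory GRing.Theory Num.Theory.
Local Open Scope ring_scope.

Fixpoint mnk (R : realType) (n k : nat) : R :=
  match n with
  | 0 => (k == 0%N)%:R
  | n'.+1 => (\sum_(i < k.+1) mnk R n' i)^-1
  end.

(* Main.v *)
Require Import Defs.
From HB Require Import structures.
From mathcomp Require Import all_boot all_order all_algebra.
From mathcomp Require Import all_classical all_reals all_analysis.
From mathcomp Require Import lra zify.
Import Order.TTheory GRing.Theory Num.Theory numFieldNormedType.Exports.
Local Open Scope classical_set_scope.
Local Open Scope ring_scope.

Section S.
Variable R : realType.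

Lemma mnk_ge0 n k : 0 <= mnk R n k.
Proof. elim: n k => [|n IH] k /=; first exact: ler0n.
by rewrite invr_ge0 sumr_ge0. Qed.

Lemma mnk_0 n : mnk R n 0 = 1.
Proof. elim: n => [|n IH] //=; by rewrite big_ord1 IH invr1. Qed.

Lemma mnkS n k : mnk R n.+1 k = (\sum_(i < k.+1) mnk R n i)^-1.
Proof. by []. Qed.

Lemma sum_recr (F : nat -> R) k : \sum_(i < k.+1) F i = \sum_(i < k) F i + F k.
Proof. by rewrite big_ord_recr. Qed.

Lemma sum_ge1 (a : nat -> R) k : a 0%N = 1 -> (forall i, 0 <= a i) ->
  1 <= \sum_(i < k.+1) a i.
Proof. move=> a0 ag; rewrite big_ord_recl /= a0 lerDl sumr_ge0 //. Qed.

Lemma anti (a b : nat -> R) k : a 0%N = 1 -> (forall i, 0 <= a i) ->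
  (forall i, a i <= b i) -> (\sum_(i < k.+1) b i)^-1 <= (\sum_(i < k.+1) a i)^-1.
Proof.
move=> a0 ag ab; have h1 := @sum_ge1 a k a0 ag.
have h2 : \sum_(i < k.+1) a i <= \sum_(i < k.+1) b i by apply: ler_sum.
have p1 : 0 < \sum_(i < k.+1) a i by exact: lt_le_trans ltr01 h1.
have p2 : 0 < \sum_(i < k.+1) b i by exact: lt_le_trans p1 h2.
by rewrite lef_pV2 ?posrE.
Qed.

Lemma mnk_anti_k p k k' : (k <= k')%N -> mnk R p.+1 k' <= mnk R p.+1 k.
Proof.
move=> kk /=.
have h1 : 1 <= \sum_(i < k.+1) mnk R p i by apply: sum_ge1; [exact: mnk_0|exact: mnk_ge0].
have h2 : \sum_(i < k.+1) mnk R p i <= \sum_(i < k'.+1) mnk R p i.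
  rewrite -!(big_mkord xpredT (fun i => mnk R p i)).
  rewrite [X in _ <= X](@big_cat_nat _ _ _ k.+1) //= lerDl sumr_ge0 // => i _; exact: mnk_ge0.
have p1 : 0 < \sum_(i < k.+1) mnk R p i by exact: lt_le_trans ltr01 h1.
have p2 : 0 < \sum_(i < k'.+1) mnk R p i by exact: lt_le_trans p1 h2.
by rewrite lef_pV2 ?posrE.
Qed.

Lemma parity q : exists j, q = (2 * j)%N \/ q = (2 * j).+1.
Proof. elim: q => [|q [j [->|->]]]; first by exists 0%N; left.
by exists j; right. by exists j.+1; left; rewrite mulnS. Qed.


Variables (m : nat -> R) (hm0 : m 0%N = 1) (hpos : forall n, 0 < m n)
  (hrec : forall n, (1 <= n)%N -> (1 + \sum_(1 <= i < n.+1) m i) * m n = 1).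

Lemma m_ge0 i : 0 <= m i. Proof. exact: ltW. Qed.

Lemma m_fix k : (\sum_(i < k.+1) m i)^-1 = m k.
Proof.
case: k => [|k]; first by rewrite big_ord1 hm0 invr1.
have h := hrec k.+1 isT.
rewrite -(big_mkord xpredT m) big_ltn // hm0.
have S0 : 0 <= \sum_(1 <= i < k.+2) m i by apply: sumr_ge0 => i _; exact: m_ge0.
have nz : 1 + \sum_(1 <= i < k.+2) m i != 0 by rewrite gt_eqF //; lra.
by apply: (mulfI nz); rewrite mulfV ?h.
Qed.

Lemma EO j k : mnk R (2 * j) k <= m k /\ m k <= mnk R (2 * j).+1 k.
Proof.
have odd_of : forall n, (forall k, mnk R n k <= m k) -> mnk R n 0 = 1 ->
    forall k, m k <= mnk R n.+1 k.
  move=> n hn h0 k'; rewrite mnkS -m_fix; apply: anti => //; exact: mnk_ge0.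
elim: j k => [|j IH] k.
  have h0 : forall k, mnk R (2 * 0) k <= m k.
    by case=> [|k'] /=; [rewrite hm0|exact: m_ge0].
  by split; [exact: h0| apply: (odd_of (2*0)%N h0); exact: mnk_0].
have he : forall k, mnk R (2 * j.+1) k <= m k.
  move=> k'; have -> : (2 * j.+1 = (2*j).+2)%N by rewrite mulnS.
  rewrite mnkS -m_fix; apply: anti => //; [exact: m_ge0|by move=> i; case: (IH i)].
by split; [exact: he|apply: (odd_of _ he); exact: mnk_0].
Qed.

Lemma mono_e j k : mnk R (2 * j) k <= mnk R (2 * j.+1) k.
Proof.
have -> : (2 * j.+1 = (2*j).+2)%N by rewrite mulnS.
elim: j k => [|j IH] k.
  by case: k => [|k]; rewrite ?mnk_0 // mnk_ge0.
have -> : (2 * j.+1 = (2*j).+2)%N by rewrite mulnS.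
rewrite [X in _ <= X]mnkS [X in X <= _]mnkS; apply: anti; [exact: mnk_0|exact: mnk_ge0|].
move=> i; rewrite !mnkS; apply: anti; [exact: mnk_0|exact: mnk_ge0|exact: IH].
Qed.

Lemma mono_o j k : mnk R (2 * j.+1).+1 k <= mnk R (2 * j).+1 k.
Proof.
rewrite !mnkS; apply: anti; [exact: mnk_0|exact: mnk_ge0|].
exact: mono_e.
Qed.

Lemma cvg_sumk (f : nat -> nat -> R) k :
  (forall i, (i < k)%N -> f i @ \oo --> m i) ->
  (fun j => \sum_(i < k) f i j) @ \oo --> \sum_(i < k) m i.
Proof.
move=> h.
apply: (@cvg_big _ _ +%R 0 xpredT add_continuous _ _ _
  (fun (i : 'I_k) j => f i j) (fun i : 'I_k => m i)) => // i _.
exact: h.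
Qed.

Lemma conv_all k : (fun j => mnk R (2 * j) k) @ \oo --> m k /\
                   (fun j => mnk R (2 * j).+1 k) @ \oo --> m k.
Proof.
elim/ltn_ind: k => k IH.
case: k IH => [|K] IH.
  have e1 : (fun j => mnk R (2 * j) 0) = fun=> 1 by apply/funext => j; rewrite mnk_0.
  have e2 : (fun j => mnk R (2 * j).+1 0) = fun=> 1 by apply/funext => j; rewrite mnk_0.
  by rewrite e1 e2 hm0; split; exact: cvg_cst.
set k := K.+1.
have ndL : nondecreasing_seq (fun j => mnk R (2 * j) k).
  by apply/nondecreasing_seqP => j; exact: mono_e.
have niU : nonincreasing_seq (fun j => mnk R (2 * j).+1 k).
  by apply/nonincreasing_seqP => j; exact: mono_o.
have cL : cvgn (fun j => mnk R (2 * j) k).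
  apply: nondecreasing_is_cvgn => //; exists (m k) => _ [j _ <-]; by case: (EO j k).
have cU : cvgn (fun j => mnk R (2 * j).+1 k).
  apply: nonincreasing_is_cvgn => //; exists (m k) => _ [j _ <-]; by case: (EO j k).
set L := limn (fun j => mnk R (2 * j) k) in cL.
set U := limn (fun j => mnk R (2 * j).+1 k) in cU.
set S := \sum_(i < k) m i.
have S1 : 1 <= S by rewrite /S /k; apply: sum_ge1 => //; exact: m_ge0.
have L0 : 0 <= L.
  apply: (le_trans _ (nondecreasing_cvgn_le ndL cL 0%N)); exact: mnk_ge0.
have U0 : 0 <= U.
  apply: (limr_ge cU); apply: nearW => j; exact: mnk_ge0.
have mk : m k * (S + m k) = 1.
  rewrite -[X in X * _]m_fix sum_recr -/S mulVf // gt_eqF //.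
  by move: (hpos k); lra.
have id1 : U * (S + L) = 1.
  have h : (fun j => mnk R (2 * j).+1 k * (\sum_(i < k) mnk R (2 * j) i + mnk R (2 * j) k))
      @ \oo --> U * (S + L).
    have hs : (fun j => \sum_(i < k) mnk R (2 * j) i) @ \oo --> S.
      by apply: (cvg_sumk (fun i j => mnk R (2 * j) i)) => i ik; case: (IH i ik).
    exact: (cvgM cU (cvgD hs cL)).
  have e : (fun j => mnk R (2 * j).+1 k * (\sum_(i < k) mnk R (2 * j) i + mnk R (2 * j) k))
      = fun=> 1.
    apply/funext => j; rewrite mnkS -sum_recr mulVf // gt_eqF //.
    apply: lt_le_trans ltr01 _; apply: sum_ge1; [exact: mnk_0|exact: mnk_ge0].
  rewrite e in h; apply: (cvg_unique (@Rhausdorff R) h); exact: cvg_cst.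
have id2 : L * (S + U) = 1.
  have cL' : (fun j => mnk R (2 * j.+1) k) @ \oo --> L.
    by rewrite (cvg_shiftS (fun j => mnk R (2 * j) k)).
  have h : (fun j => mnk R (2 * j.+1) k * (\sum_(i < k) mnk R (2 * j).+1 i + mnk R (2 * j).+1 k))
      @ \oo --> L * (S + U).
    have hs : (fun j => \sum_(i < k) mnk R (2 * j).+1 i) @ \oo --> S.
      by apply: (cvg_sumk (fun i j => mnk R (2 * j).+1 i)) => i ik; case: (IH i ik).
    exact: (cvgM cL' (cvgD hs cU)).
  have e : (fun j => mnk R (2 * j.+1) k * (\sum_(i < k) mnk R (2 * j).+1 i + mnk R (2 * j).+1 k))
      = fun=> 1.
    apply/funext => j; have -> : (2 * j.+1 = (2*j).+2)%N by rewrite mulnS.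
    rewrite mnkS -sum_recr mulVf // gt_eqF //.
    apply: lt_le_trans ltr01 _; apply: sum_ge1; [exact: mnk_0|exact: mnk_ge0].
  rewrite e in h; apply: (cvg_unique (@Rhausdorff R) h); exact: cvg_cst.
have mpos := hpos k.
have UL : U = L by nra.
rewrite UL in id1 cU.
have Lm : L = m k by nra.
by rewrite -Lm; split.
Qed.

Lemma mnk1 i : mnk R 1 i = 1.
Proof. by rewrite mnkS big_ord_recl big1 ?addr0 ?invr1. Qed.

Lemma mnk2 i : mnk R 2 i = (i.+1%:R)^-1.
Proof.
rewrite mnkS (eq_bigr (fun _ => 1)); first by rewrite sumr_const card_ord.
by move=> j _; rewrite mnk1.
Qed.

Lemma mnk3 k : mnk R 3 k = (series (@harmonic R) k.+1)^-1.
Proof.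
rewrite mnkS; under eq_bigr do rewrite mnk2.
by rewrite /series /= big_mkord.
Qed.

Lemma mnk3_cvg : (fun k => mnk R 3 k) @ \oo --> 0.
Proof.
have hs : series (@harmonic R) @ \oo --> +oo.
  apply: nondecreasing_dvgn_lt; last exact: dvg_harmonic.
  by apply: nondecreasing_series => n _ _; exact: harmonic_ge0.
have hs' : (fun k => series (@harmonic R) k.+1) @ \oo --> +oo.
  by rewrite (cvg_shiftS (series (@harmonic R))).
have pos : forall k, 0 < series (@harmonic R) k.+1.
  move=> k; rewrite /series /= big_nat_recl // invr1.
  apply: (lt_le_trans ltr01); rewrite lerDl; apply: sumr_ge0 => i _.
  by rewrite invr_ge0.
have hn : \forall k \near \oo, 0 < series (@harmonic R) k.+1 by exact: nearW.
have := (gtr0_cvgV0 (f := fun k => series (@harmonic R) k.+1) hn).2 hs'.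
have e : (fun k => mnk R 3 k) = (fun k => (series (@harmonic R) k.+1)^-1).
  by apply/funext => k; rewrite mnk3.
by move=> h; rewrite e; exact: h.
Qed.

Lemma mnk_le3 n k : (2 <= n)%N -> mnk R n k <= mnk R 3 k.
Proof.
move=> n2; have [j [E|E]] := parity n; subst n.
  apply: (le_trans (proj1 (EO j k))); exact: (proj2 (EO 1 k)).
have niU : nonincreasing_seq (fun j => mnk R (2 * j).+1 k).
  by apply/nonincreasing_seqP => i; exact: mono_o.
apply: (niU 1%N j); case: j n2 => //.
Qed.

Lemma part5 n : (2 <= n)%N -> (fun k => mnk R n k) @ \oo --> 0.
Proof.
move=> n2; apply: (@squeeze_cvgr _ _ _ _ (fun=> 0) (fun k => mnk R 3 k)).
- by apply: nearW => k; rewrite mnk_ge0 mnk_le3.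
- exact: cvg_cst.
- exact: mnk3_cvg.
Qed.

Lemma part6 n : (2 <= n)%N -> forall mu : probability R R,
      (forall k, (\int[mu]_x (x ^+ k)%:E = (mnk R n k)%:E)%E) ->
      mu [set 1] = 0%E.
Proof.
move=> n2 mu hmom.
have le1 : forall k, (mu [set 1%R] <= (mnk R n k)%:E)%E.
  move=> k; apply: (@le_trans _ _ (mnk R n (2 * k))%:E); last first.
    rewrite lee_fin; case: n n2 hmom => [|n'] // n2 _; apply: mnk_anti_k; lia.
  rewrite -hmom.
  have mi : (\int[mu]_x (\1_[set 1%R] x)%:E)%E = mu [set 1%R].
    rewrite integral_indic ?setIT //; exact: measurable_set1.
  rewrite -mi.
  apply: (@ge0_le_integral _ R R mu setT measurableT (fun x => (\1_[set 1%R] x)%:E) (fun x => (x ^+ (2 * k))%:E)).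
  - by move=> x _; rewrite lee_fin indicE.
  - apply/measurable_realfun.measurable_EFinP.
    apply: measurable_realfun.measurable_indic; exact: measurable_set1.
  - apply/measurable_realfun.measurable_EFinP.
    exact: measurable_realfun.exprn_measurable.
  - move=> x _; rewrite lee_fin indicE; case: (boolP (x \in [set 1%R])).
      by rewrite inE => ->; rewrite expr1n.
    by move=> _; rewrite exprM exprn_ge0 // sqr_ge0.
have h5 := part5 n n2.
have ge0 : (0 <= mu [set 1%R])%E by exact: measure_ge0.
move: ge0 (le1 0%N); case E: (mu [set 1%R]) => [r| |] //; rewrite !lee_fin => r0 _.
congr (_%:E); apply/le_anti; rewrite r0 andbT.
have -> : 0 = lim ((fun k => mnk R n k) @ \oo) by rewrite (cvg_lim (@Rhausdorff R) h5).
apply: limr_ge; first exact: (cvgP _ h5).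
by apply: nearW => k; move: (le1 k); rewrite E lee_fin.
Qed.

Lemma main :
  (forall k, nondecreasing_seq (fun n => mnk R (2 * n) k)) /\
  (forall k, nonincreasing_seq (fun n => mnk R (2 * n).+1 k)) /\
  (forall k, (fun n : nat => mnk R (2 * n) k : R) @ \oo --> m k) /\
  (forall k, (fun n : nat => mnk R (2 * n).+1 k : R) @ \oo --> m k) /\
  (forall n, (2 <= n)%N -> (fun k : nat => mnk R n k : R) @ \oo --> (0 : R)) /\
  (forall n, (2 <= n)%N -> forall mu : probability R R,
      mu (~` `[0, 1]) = 0%E ->
      (forall k, (\int[mu]_x (x ^+ k)%:E = (mnk R n k)%:E)%E) ->
      mu [set 1] = 0%E).
Proof using hm0 hpos hrec.
split; first by move=> k; apply/nondecreasing_seqP => j; exact: mono_e.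
split; first by move=> k; apply/nonincreasing_seqP => j; exact: mono_o.
split; first by move=> k; case: (conv_all k).
split; first by move=> k; case: (conv_all k).
split; first exact: part5.
by move=> n n2 mu _; exact: part6.
Qed.
End S.

Theorem lemma2p1 (R : realType) (m : nat -> R)
  (hm0 : m 0%N = 1) (hpos : forall n, 0 < m n)
  (hrec : forall n, (1 <= n)%N -> (1 + \sum_(1 <= i < n.+1) m i) * m n = 1) :
  (forall k, nondecreasing_seq (fun n => mnk R (2 * n) k)) /\
  (forall k, nonincreasing_seq (fun n => mnk R (2 * n).+1 k)) /\
  (forall k, (fun n : nat => mnk R (2 * n) k : R) @ \oo --> m k) /\
  (forall k, (fun n : nat => mnk R (2 * n).+1 k : R) @ \oo --> m k) /\
  (forall n, (2 <= n)%N -> (fun k : nat => mnk R n k : R) @ \oo --> (0 : R)) /\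
  (forall n, (2 <= n)%N -> forall mu : probability R R,
      mu (~` `[0, 1]) = 0%E ->
      (forall k, (\int[mu]_x (x ^+ k)%:E = (mnk R n k)%:E)%E) ->
      mu [set 1] = 0%E).
Proof. exact: (@main R m hm0 hpos hrec). Qed.
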